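(* Let $m$ be a non-negative integer, let $A$ and $D$ be two $k$-tuples of elements of $\mathbb{Z}/m\mathbb{Z}$, and let $p_1,p_2$ be positive integers with $k\mid p_1$. Then the orbit of $S=\mathrm{IAP}(A,D)$ is $(p_1,p_2)$-periodic if and only if $\pi_{m/\gcd(p_1/k,m)}(D)=0$ and the $1\times 2k$ block row $(A\mid D)$ lies in $\mathrm{Lker}_m\,P$, where $$P=\begin{pmatrix} W & 0_k\\ T_k^{(p_2)} & W\end{pmatrix},\qquad W=C_k^{(p_2)}+(-1)^{p_2+1}I_k .$$
   Context: $\mathbb{Z}/0\mathbb{Z}=\mathbb{Z}$. For $d\mid m$, $\pi_d$ is reduction from $\mathbb{Z}/m\mathbb{Z}$ to $\mathbb{Z}/d\mathbb{Z}$, applied entrywise. For $k$-tuples $A=(a_0,\dots,a_{k-1})$, $D=(d_0,\dots,d_{k-1})$, $\mathrm{IAP}(A,D)$ is the sequence $(u_j)_{j\in\mathbb{Z}}$ with $u_{qk+r}=a_r+qd_r$ ($q\in\mathbb{Z}$, $0\le r\le k-1$). The orbit of a sequence $(u_j)_{j\in\mathbb{Z}}$ is $(a_{i,j})_{(i,j)\in\mathbb{N}\times\mathbb{Z}}$ with $a_{0,j}=u_j$, $a_{i,j}=-a_{i-1,j}-a_{i-1,j+1}$ for $i\ge1$; it is $(p,q)$-periodic if $a_{i+q,j}=a_{i,j+p}=a_{i,j}$ for all $(i,j)$. $C_k^{(i)}$ is the $k\times k$ integer matrix $\big(\sum_{\alpha\in\mathbb{Z}}\binom{i}{\alpha k+r-s}\big)_{1\le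 r,s\le k}$ and $T_k^{(i)}=\big(\sum_{\alpha\in\mathbb{Z}}\alpha\binom{i}{\alpha k+r-s}\big)_{1\le r,s\le k}$, where $\binom{a}{b}=0$ if $b<0$ or $b>a$. For an $n_1\times n_2$ integer matrix $M$, $\mathrm{Lker}_m M=\{X\in(\mathbb{Z}/m\mathbb{Z})^{n_1}: X\,\pi_m(M)=0\}$ (row vectors). *)

(* Defs.v *)
From HB Require Import structures.
From mathcomp Require Import all_boot all_order all_algebra.
Set Implicit Arguments. Unset Strict Implicit. Unset Printing Implicit Defensive.
Import Order.TTheory GRing.Theory Num.Theory.
Local Open Scope ring_scope.

(* Elements of Z/mZ are represented by integer representatives; equality in
   Z/mZ is congruence modulo m (for m = 0 this is equality in Z, matching
   Z/0Z = Z, since (x %% 0)%Z = x). *)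

Definition binomZ (i : nat) (b : int) : int :=
  match b with Posz n => ('C(i, n))%:Z | Negz _ => 0 end.

(* C_k^(i) with 0-based indices r,s (differences r - s are unchanged).
   The sum over alpha in Z only has nonzero terms for 0 <= alpha <= i
   (as 0 <= r, s < k and k >= 1), so we sum over that range. *)
Definition Cmat (k i : nat) : 'M[int]_k :=
  \matrix_(r < k, s < k)
    \sum_(0 <= a < i.+1) binomZ i (a%:Z * k%:Z + r%:Z - s%:Z).

Definition Tmat (k i : nat) : 'M[int]_k :=
  \matrix_(r < k, s < k)
    \sum_(0 <= a < i.+1) a%:Z * binomZ i (a%:Z * k%:Z + r%:Z - s%:Z).

(* IAP(A,D): u_{qk+r} = a_r + q d_r  (q in Z, 0 <= r < k) *)
Definition IAP (k : nat) (A D : k.-tuple int) (j : int) : int :=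
  let r := absz (j %% k%:Z)%Z in
  nth 0 A r + (j %/ k%:Z)%Z * nth 0 D r.

Fixpoint orbit (u : int -> int) (i : nat) (j : int) : int :=
  match i with
  | 0%N => u j
  | i'.+1 => - orbit u i' j - orbit u i' (j + 1)
  end.

Definition periodic_mod (m : nat) (u : int -> int) (p q : nat) : Prop :=
  forall (i : nat) (j : int),
    (orbit u (i + q) j = orbit u i j %[mod m%:Z])%Z /\
    (orbit u i (j + p%:Z) = orbit u i j %[mod m%:Z])%Z.

Definition in_Lker (m : nat) (n1 n2 : nat) (X : 'rV[int]_n1) (M : 'M[int]_(n1, n2)) : Prop :=
  forall j : 'I_n2, ((X *m M) ord0 j = 0 %[mod m%:Z])%Z.

Definition tuple_row (k : nat) (A : k.-tuple int) : 'rV[int]_k := \row_(i < k) tnth A i.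

Definition Pmat (k p2 : nat) : 'M[int]_(k + k) :=
  let W := Cmat k p2 + ((-1) ^+ p2.+1)%:M in
  block_mx W 0 (Tmat k p2) W.

(* Main.v *)
Require Import Defs.
From mathcomp Require Import all_boot all_order all_algebra.
From mathcomp Require Import zify ring.
Import Order.TTheory GRing.Theory Num.Theory.
Local Open Scope ring_scope.
Local Notation orbit := Defs.orbit.

Lemma modP (d a b : int) : (a = b %[mod d])%Z <-> (d %| a - b)%Z.
Proof. by rewrite -eqz_mod_dvd; split => [->|/eqP]. Qed.

Lemma orbit_add u i n j : orbit u (i + n) j = orbit (orbit u n) i j.
Proof. by elim: i j => [|i IH] j; rewrite ?add0n // addSn /= !IH. Qed.

Lemma orbit_shift u c i j : orbit (fun x => u (x + c)) i j = orbit u i (j + c).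
Proof. by elim: i j => [|i IH] j //=; rewrite !IH addrAC. Qed.

Lemma orbit_congr (d : int) u v : (forall j, (d %| u j - v j)%Z) ->
  forall i j, (d %| orbit u i j - orbit v i j)%Z.
Proof.
move=> H; elim=> [|i IH] j //=.
have -> : - orbit u i j - orbit u i (j + 1) - (- orbit v i j - orbit v i (j + 1))
  = - ((orbit u i j - orbit v i j) + (orbit u i (j+1) - orbit v i (j + 1))) by ring.
by rewrite rpredN rpredD.
Qed.

Lemma orbit_closed u i j : orbit u i j =
  (-1) ^+ i * \sum_(0 <= t < i.+1) ('C(i, t))%:Z * u (j + t%:Z).
Proof.
elim: i j => [|i IH] j /=.
  by rewrite big_nat1 expr0 bin0 addr0 !mul1r.
rewrite !IH exprS.
have -> : \sum_(0 <= t < i.+2) ('C(i.+1, t))%:Z * u (j + t%:Z) =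
  \sum_(0 <= t < i.+1) ('C(i, t))%:Z * u (j + t%:Z) +
  \sum_(0 <= t < i.+1) ('C(i, t))%:Z * u (j + 1 + t%:Z).
  rewrite big_nat_recl // [in X in _ = X + _]big_nat_recl // !bin0.
  idtac.
  under eq_bigr => t _ do rewrite binS PoszD mulrDl intS addrA.
  rewrite big_split /= [X in _ + (X + _) = _]big_nat_recr //= bin_small //.
  under [in RHS]eq_bigr => t _ do rewrite intS addrA.
  rewrite mul0r addr0; ring.
ring.
Qed.

Lemma IAP_at k (A D : k.-tuple int) (Q : int) (s : 'I_k) :
  IAP A D (Q * k%:Z + s%:Z) = tnth A s + Q * tnth D s.
Proof.
have k0 : (0 < k)%N by case: s => s /= /(leq_ltn_trans (leq0n s)).
rewrite /IAP modzMDl divzMDl; last by rewrite eqz_nat -lt0n.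
rewrite modz_nat divz_nat modn_small // divn_small // addr0 /=.
by rewrite !(tnth_nth 0).
Qed.

Lemma IAP_shift k (A D : k.-tuple int) (j c : int) : (0 < k)%N ->
  IAP A D (j + c * k%:Z) = IAP A D j + c * nth 0 D (absz (j %% k%:Z)%Z).
Proof.
move=> k0; rewrite /IAP [j + _]addrC modzMDl divzMDl; last by rewrite eqz_nat -lt0n.
ring.
Qed.

Lemma binomZ_ind q b : binomZ q b =
  \sum_(0 <= t < q.+1) (if b == t%:Z then ('C(q, t))%:Z else 0).
Proof.
case: b => [n|n] /=; last by rewrite big1.
case: (ltnP n q.+1) => hn.
  rewrite (bigD1_seq n) ?mem_index_iota ?iota_uniq //= eqxx big1 ?addr0 //.
  by move=> i; rewrite eqz_nat eq_sym => /negbTE ->.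
rewrite bin_small // big1_seq // => i; rewrite mem_index_iota eqz_nat => /andP[_ hi].
by case: eqP => // E; move: hi; rewrite -E ltnNge hn.
Qed.

Lemma cond_eq k (a r s t : nat) : (r < k)%N -> (0 < k)%N ->
  (a%:Z * k%:Z + r%:Z - s%:Z == t%:Z) = ((r == (s + t) %% k) && (a == (s + t) %/ k))%N.
Proof.
move=> rk k0; rewrite subr_eq -!PoszM -!PoszD eqz_nat.
apply/eqP/andP.
  move=> E; rewrite addnC -E modnMDl modn_small // divnMDl // divn_small // addn0.
  by split.
by case=> /eqP -> /eqP ->; rewrite -divn_eq addnC.
Qed.

Lemma key k (A D : k.-tuple int) q (Q : int) (s : 'I_k) :
  \sum_(0 <= t < q.+1) ('C(q, t))%:Z * IAP A D (Q * k%:Z + s%:Z + t%:Z) =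
  \sum_(r < k) \sum_(0 <= a < q.+1)
     binomZ q (a%:Z * k%:Z + r%:Z - s%:Z) * (tnth A r + (Q + a%:Z) * tnth D r).
Proof.
have k0 : (0 < k)%N by case: s => s /= /(leq_ltn_trans (leq0n s)).
apply/esym.
under eq_bigr => r _ do under eq_bigr => a _ do rewrite binomZ_ind mulr_suml.
under eq_bigr => r _ do rewrite exchange_big /=.
rewrite exchange_big /=; apply: eq_big_seq => t; rewrite mem_index_iota => /andP[_ tq]; apply/esym.
under eq_bigr => r _ do under eq_bigr => a _ do rewrite cond_eq ?ltn_ord //.
have r0lt : ((s + t) %% k < k)%N by rewrite ltn_mod.
have a0lt : ((s + t) %/ k < q.+1)%N.
  rewrite ltn_divLR // mulSn.
  have := leq_pmulr q k0; have := ltn_ord s; lia.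
rewrite (bigD1 (Ordinal r0lt)) //= [X in _ = _ + X]big1 ?addr0; last first.
  move=> r hr; rewrite big1 // => a _.
  have -> : (nat_of_ord r == (s + t) %% k)%N = false.
    by apply/negbTE; apply: contra hr => /eqP h; apply/eqP/val_inj.
  by rewrite /= mul0r.
rewrite eqxx /= (bigD1_seq ((s + t) %/ k)%N) ?mem_index_iota ?iota_uniq //= eqxx.
rewrite big1_seq ?addr0; last by move=> a /andP[/negbTE -> _]; rewrite mul0r.
have -> : Q * k%:Z + s%:Z + t%:Z = (Q + ((s + t) %/ k)%N%:Z) * k%:Z + ((s + t) %% k)%N%:Z.
  have E : s%:Z + t%:Z = ((s+t)%/k)%N%:Z * k%:Z + ((s+t)%%k)%N%:Z.
    by rewrite -PoszD -PoszM -PoszD -divn_eq.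
  rewrite -addrA E; ring.
by rewrite (IAP_at _ A D _ (Ordinal r0lt)).
Qed.

Lemma orbit_IAP k (A D : k.-tuple int) q (Q : int) (s : 'I_k) :
  orbit (IAP A D) q (Q * k%:Z + s%:Z) = (-1) ^+ q *
   ((tuple_row A *m Cmat k q) 0 s + Q * (tuple_row D *m Cmat k q) 0 s
    + (tuple_row D *m Tmat k q) 0 s).
Proof.
rewrite orbit_closed key; congr (_ * _).
rewrite !mxE.
under [in RHS]eq_bigr => r _ do rewrite !mxE.
under [X in _ = _ + _ * X + _]eq_bigr => r _ do rewrite !mxE.
under [X in _ = _ + X]eq_bigr => r _ do rewrite !mxE.
rewrite mulr_sumr -!big_split /=; apply: eq_bigr => r _.
rewrite !mulr_sumr -!big_split /=; apply: eq_bigr => a _.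
ring.
Qed.

Lemma P_entries k (A D : k.-tuple int) q (s : 'I_k) :
  (row_mx (tuple_row A) (tuple_row D) *m Pmat k q) 0 (lshift k s) =
    (tuple_row A *m Cmat k q) 0 s + (-1) ^+ q.+1 * tnth A s + (tuple_row D *m Tmat k q) 0 s /\
  (row_mx (tuple_row A) (tuple_row D) *m Pmat k q) 0 (rshift k s) =
    (tuple_row D *m Cmat k q) 0 s + (-1) ^+ q.+1 * tnth D s.
Proof.
rewrite /Pmat mul_row_block !mulmxDr !mul_mx_scalar mulmx0 add0r row_mxEl row_mxEr.
by rewrite !mxE.
Qed.

Lemma nat_dvd (m c n : nat) : (0 < c)%N -> (m %| c * n)%N = (m %/ gcdn c m %| n)%N.
Proof.
move=> c0; set g := gcdn c m.
have g0 : (0 < g)%N by rewrite gcdn_gt0 c0.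
have Em : m = (m %/ g * g)%N by rewrite divnK // dvdn_gcdr.
have Ec : c = (c %/ g * g)%N by rewrite divnK // dvdn_gcdl.
have cop : coprime (m %/ g) (c %/ g).
  rewrite /coprime -(eqn_pmul2r g0) mul1n muln_gcdl -Em -Ec gcdnC.
  by [].
rewrite {1}Em {1}Ec mulnAC dvdn_pmul2r // Gauss_dvdr //.
Qed.

Theorem theorem5 (m k : nat) (A D : k.-tuple int) (p1 p2 : nat) :
  (0 < p1)%N -> (0 < p2)%N -> (k %| p1)%N ->
  (periodic_mod m (IAP A D) p1 p2 <->
   ((forall r : 'I_k,
       (tnth D r = 0 %[mod (m %/ gcdn (p1 %/ k) m)%N%:Z])%Z) /\
    in_Lker m (row_mx (tuple_row A) (tuple_row D)) (Pmat k p2))).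
Proof.
move=> p1_0 p2_0 kp1.
have k0 : (0 < k)%N.
  by case: k A D kp1 => // A D; rewrite dvd0n => /eqP E; rewrite E in p1_0.
set c := (p1 %/ k)%N.
have Ep1 : p1%:Z = c%:Z * k%:Z by rewrite -PoszM divnK.
have c0 : (0 < c)%N by rewrite divn_gt0 // dvdn_leq.
have Hh : (forall r : 'I_k, (tnth D r = 0 %[mod (m %/ gcdn c m)%N%:Z])%Z) <->
          (forall r : 'I_k, (m%:Z %| c%:Z * tnth D r)%Z).
  by split => H r; move: (H r); rewrite modP subr0 !dvdzE abszM /= nat_dvd.
have shift j : IAP A D (j + p1%:Z) - IAP A D j = c%:Z * nth 0 D (absz (j %% k%:Z)%Z).
  by rewrite Ep1 IAP_shift //; ring.
have sg : (-1) ^+ p2.+1 = - (-1) ^+ p2 :> int by rewrite exprS mulN1r.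
have Hv : (forall j, (orbit (IAP A D) p2 j = IAP A D j %[mod m%:Z])%Z) <->
          in_Lker m (row_mx (tuple_row A) (tuple_row D)) (Pmat k p2).
  split.
    move=> H j; rewrite -(splitK j); case: (split j) => s /=;
      have [e1 e2] := P_entries _ A D p2 s;
      have := H (0 * k%:Z + s%:Z); have := H (1 * k%:Z + s%:Z);
      rewrite !orbit_IAP !IAP_at !modP => h1 h0;
      rewrite subr0; [rewrite e1 | rewrite e2].
      set E0 := (X in (_ %| X)%Z) in h0.
      have -> : (tuple_row A *m Cmat k p2) 0 s + (-1) ^+ p2.+1 * tnth A s +
        (tuple_row D *m Tmat k p2) 0 s = (-1) ^+ p2 * E0.
        rewrite /E0 sg -signr_odd; case: (odd p2); rewrite ?expr0 ?expr1; ring.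
      exact: dvdz_mull.
    set E0 := (X in (_ %| X)%Z) in h0.
    set E1 := (X in (_ %| X)%Z) in h1.
    have -> : (tuple_row D *m Cmat k p2) 0 s + (-1) ^+ p2.+1 * tnth D s =
        (-1) ^+ p2 * (E1 - E0).
      rewrite /E0 /E1 sg -signr_odd; case: (odd p2); rewrite ?expr0 ?expr1; ring.
    by apply: dvdz_mull; rewrite rpredB.
  move=> H x.
  have xm : (0 <= x %% k%:Z)%Z by rewrite modz_ge0 // eqz_nat -lt0n.
  have xl : (absz (x %% k%:Z)%Z < k)%N.
    by rewrite -ltz_nat gez0_abs // ltz_pmod.
  rewrite (divz_eq x k%:Z).
  have -> : (x %% k%:Z)%Z = (Ordinal xl : nat)%:Z by rewrite /= gez0_abs.
  rewrite orbit_IAP IAP_at modP.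
  have [h1 h2] := P_entries _ A D p2 (Ordinal xl).
  have d1 := H (lshift k (Ordinal xl)); have d2 := H (rshift k (Ordinal xl)).
  rewrite h1 modP subr0 in d1; rewrite h2 modP subr0 in d2.
  set L1 := (X in (_ %| X)%Z) in d1.
  set L2 := (X in (_ %| X)%Z) in d2.
  set Q := (x %/ k%:Z)%Z.
  have -> : (-1) ^+ p2 * ((tuple_row A *m Cmat k p2) 0 (Ordinal xl) +
      Q * (tuple_row D *m Cmat k p2) 0 (Ordinal xl) +
      (tuple_row D *m Tmat k p2) 0 (Ordinal xl)) -
      (tnth A (Ordinal xl) + Q * tnth D (Ordinal xl)) = (-1) ^+ p2 * (L1 + Q * L2).
    rewrite /L1 /L2 sg -signr_odd; case: (odd p2); rewrite ?expr0 ?expr1; ring.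
  by apply: dvdz_mull; rewrite rpredD // dvdz_mull.
split.
  move=> H; split.
    apply/Hh => r.
    have := (H 0%N r%:Z).2; rewrite /= modP shift.
    by rewrite modz_nat modn_small // (tnth_nth 0).
  by apply/Hv => j; have := (H 0%N j).1; rewrite add0n.
case=> /Hh hD /Hv hV i j; split.
  rewrite orbit_add modP; apply: orbit_congr => x; rewrite -modP; exact: hV.
rewrite modP -orbit_shift; apply: orbit_congr => x; rewrite shift.
have xm : (0 <= x %% k%:Z)%Z by rewrite modz_ge0 // eqz_nat -lt0n.
have xl : (absz (x %% k%:Z)%Z < k)%N.
  by rewrite -ltz_nat gez0_abs // ltz_pmod.
by have := hD (Ordinal xl); rewrite (tnth_nth 0).
Qed.
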